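(* Let $\varphi=\mathrm{Parity}(\{0,1\})$ be the co-Büchi objective. There exists an infinitely branching (countable) MDP $\mathcal M$ with a color function $\mathit{Col}:S\to\{0,1\}$ and an initial state $s$ such that (i) for every FR-strategy $\sigma$ we have $\mathcal P_{\mathcal M,s,\sigma}(\varphi)=0$, and (ii) there exists an HD-strategy $\sigma$ such that $\mathcal P_{\mathcal M,s,\sigma}(\varphi)=1$. Hence optimal (and even almost-surely winning) strategies and $\epsilon$-optimal strategies for co-Büchi require infinite memory (i.e., cannot in general be chosen FR).
   Context: An MDP is $\mathcal M=\langle S,S_\Box,S_\circ,\longrightarrow,P\rangle$ where $S$ is a countable set of states partitioned into player states $S_\Box$ and random states $S_\circ$, $\longrightarrow\subseteq S\times S$ is a transition relation in which every state has at least one successor, and $P$ assigns to each random state a probability distribution over its successors. $\mathcal M$ is finitely branching if every state has finitely many successors, otherwise infinitely branching. A play is an infinite sequence $s_0s_1\cdots$ with $s_i\longrightarrow s_{i+1}$ for all $i$. A strategy is a function $\sigma:S^*S_\Box\to\mathcal D(S)$ assigning to each partial play ending in a player state $s$ a probability distribution over successors of $s$. Strategies are implemented by probabilistic transducers $(\mathsf M,\mathsf m_0,\pi_u,\pi_s)$ with countable memory $\mathsf M$, initial mode $\mathsf m_0$, randomized memory update $\pi_u:\mathsf M\times S\to\mathcal D(\mathsf M)$ and randomized successor choice $\pi_s:\mathsf M\times S_\Box\to\mathcal D(S)$ (choosing only successors of the current state); the induced strategy is $\sigma(s_0\cdots s_n)=\pi_s(s_n,\pi_u(s_0\cdots s_{n-1},\mathsf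 m_0))$ with $\pi_u$ extended naturally. A strategy is finite-memory (F) if some transducer with finite $\mathsf M$ induces it, deterministic (D) if $\pi_u,\pi_s$ can be taken Dirac; FR = finite-memory randomized, HD = history-dependent deterministic. $\mathcal P_{\mathcal M,s,\sigma}$ is the induced probability measure on plays from $s$. For a color function $\mathit{Col}:S\to\mathcal C$ with $\mathcal C\subseteq\mathbb N$ finite, $\mathrm{Parity}(\mathcal C)$ is the set of plays in which the largest color occurring infinitely often is even; thus $\mathrm{Parity}(\{0,1\})$ (co-Büchi) is the set of plays visiting color-1 states only finitely often. The value of $s$ is $\sup_\sigma\mathcal P_{\mathcal M,s,\sigma}(\varphi)$; $\sigma$ is $\epsilon$-optimal if it achieves at least value minus $\epsilon$, optimal if $\epsilon=0$, almost-surely winning if it achieves probability $1$. *)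

(* Defs.v *)
From HB Require Import structures.
From mathcomp Require Import all_boot all_order all_algebra.
From mathcomp Require Import classical_sets boolp cardinality reals ereal esum.
Set Implicit Arguments. Unset Strict Implicit. Unset Printing Implicit Defensive.
Import Order.TTheory GRing.Theory Num.Theory.
Local Open Scope classical_set_scope.
Local Open Scope ring_scope.

Section MDPDefs.
Variable R : realType.

Definition is_distr (T : countType) (d : T -> R) : Prop :=
  (forall x, 0 <= d x) /\ (\esum_(x in [set: T]) (d x)%:E = 1%E).

Record MDP := {
  St : countType;
  player : St -> bool;
  trans : St -> St -> Prop;
  trans_total : forall s, exists t, trans s t;
  prob : St -> St -> R;
  prob_distr : forall s, ~~ player s -> is_distr (prob s);
  prob_succ : forall s t, ~~ player s -> prob s t != 0 -> trans s t
}.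

Definition infinitely_branching (M : MDP) : Prop :=
  exists s : St M, ~ finite_set [set t | trans s t].

(* a strategy: partial play (s0 :: rest) ending in a player state |-> distribution *)
Definition strat (M : MDP) := seq (St M) -> St M -> R.

(* Probability of the cylinder of a finite path from initial state s
   (the empty path has the full cylinder, of probability 1). *)
Fixpoint cylp (M : MDP) (sigma : strat M) (pre : seq (St M)) (cur : St M)
  (rest : seq (St M)) : R :=
  match rest with
  | [::] => 1
  | t :: r =>
      (if player cur then sigma (rcons pre cur) t else prob cur t)
      * cylp sigma (rcons pre cur) t r
  end.

Definition pcyl (M : MDP) (sigma : strat M) (s : St M) (h : seq (St M)) : R :=
  match h with
  | [::] => 1
  | s0 :: rest => (s0 == s)%:R * cylp sigma [::] s0 rest
  end.

Definition play (M : MDP) := nat -> St M.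

Definition cyl (M : MDP) (h : seq (St M)) : set (play M) :=
  [set p | forall i, (i < size h)%N -> p i = nth (p i) h i].

(* P_{M,s,sigma}: the (Caratheodory outer) measure on plays generated by the
   cylinder probabilities; it coincides with the induced probability measure
   on all measurable sets of plays. *)
Definition Prob (M : MDP) (sigma : strat M) (s : St M) (A : set (play M))
  : \bar R :=
  ereal_inf [set \esum_(i in [set: nat]) (pcyl sigma s (c i))%:E
            | c in [set c : nat -> seq (St M) |
                    A `<=` \bigcup_(i in [set: nat]) cyl (c i)]].

Definition inf_often (M : MDP) (Col : St M -> nat) (p : play M) (c : nat) :=
  forall N, exists n, (N <= n)%N /\ Col (p n) = c.

Definition Parity (M : MDP) (Col : St M -> nat) : set (play M) :=
  [set p | exists c, ~~ odd c /\ inf_often Col p c /\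
           forall c', (c < c')%N -> ~ inf_often Col p c'].

Record FRtransducer (M : MDP) := {
  Mem : finType;
  m0 : Mem;
  upd : Mem -> St M -> Mem -> R;
  succ : Mem -> St M -> St M -> R;
  upd_distr : forall m s, (forall m', 0 <= upd m s m') /\ \sum_m' upd m s m' = 1;
  succ_distr : forall m s, player s -> is_distr (succ m s);
  succ_succ : forall m s t, player s -> succ m s t != 0 -> trans s t
}.

Definition memdist (M : MDP) (T : FRtransducer M) (w : seq (St M)) : Mem T -> R :=
  foldl (fun d s => fun m' => \sum_m d m * upd m s m')
        (fun m => (m == m0 T)%:R) w.

Definition FR_strategy (M : MDP) (T : FRtransducer M) : strat M :=
  fun h t => match h with
             | [::] => 0
             | s0 :: rest => \sum_m @memdist M T (belast s0 rest) m
                               * succ m (last s0 rest) t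
             end.

Record HDtransducer (M : MDP) := {
  DMem : countType;
  dm0 : DMem;
  dupd : DMem -> St M -> DMem;
  dsucc : DMem -> St M -> St M;
  dsucc_succ : forall m s, player s -> trans s (dsucc m s)
}.

Arguments dm0 {M} _ : rename.
Arguments dupd {M} _ _ _.
Arguments dsucc {M} _ _ _.

Definition HD_strategy (M : MDP) (T : HDtransducer M) : strat M :=
  fun h t => match h with
             | [::] => 0
             | s0 :: rest =>
                 (t == dsucc T (foldl (dupd T) (dm0 T) (belast s0 rest))
                             (last s0 rest))%:R
             end.

End MDPDefs.

(* Main.v *)
Require Import Defs.
From HB Require Import structures.
From mathcomp Require Import all_boot all_order all_algebra.
From mathcomp Require Import classical_sets boolp cardinality reals ereal esum.
From mathcomp Require Import fsbigop topology sequences normedtype.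
From mathcomp Require Import ring lra.
Import Order.TTheory GRing.Theory Num.Theory.
Local Open Scope classical_set_scope.
Local Open Scope ring_scope.
Set Implicit Arguments. Unset Strict Implicit. Unset Printing Implicit Defensive.

Section Gen.
Variable R : realType.

Lemma esum_pt (k : nat) (v : R) : 0 <= v ->
  (\esum_(t in [set: nat]) (if t == k then v else 0)%:E = v%:E)%E.
Proof.
move=> v0; rewrite -(@esum_set1 _ _ k (fun _ => v%:E)) ?lee_fin //.
rewrite [RHS]esum_mkcond; apply: eq_esum => t _.
by rewrite in_set1; case: (t == k).
Qed.

Lemma esum_supp0 (a : nat -> R) : (forall t, t != 0%N -> a t = 0) -> 0 <= a 0%N ->
  (\esum_(t in [set: nat]) (a t)%:E = (a 0%N)%:E)%E.
Proof.
move=> a0 ag; rewrite -(@esum_pt 0%N) //; apply: eq_esum => t _.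
by case: eqP => [->//|/eqP /a0 ->].
Qed.

Lemma esum_ge1 (T : choiceType) (a : T -> \bar R) (i : T) : (0 <= a i)%E ->
  (a i <= \esum_(t in [set: T]) a t)%E.
Proof.
move=> ai; apply: esum_ge; exists [set i]; first by split => //; exact: finite_set1.
by rewrite fsbig_set1.
Qed.

Lemma esum_scale (T : choiceType) (k : R) (a : T -> \bar R) : 0 <= k ->
  (forall t, 0 <= a t)%E ->
  (\esum_(t in [set: T]) (k%:E * a t) <= k%:E * \esum_(t in [set: T]) a t)%E.
Proof.
move=> k0 a0; apply: ge_ereal_sup => _ [X [finX _] <-].
rewrite -ge0_mule_fsumr //; apply: lee_wpmul2l; first by rewrite lee_fin.
apply: ereal_sup_ubound; exists X => //.
Qed.


Definition qq (s : nat) : R := (2^-1) ^+ s.-1.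
Definition prob0 (s t : nat) : R :=
  if (s <= 1)%N then 0 else if t == 0%N then 1 - qq s else if t == 1%N then qq s else 0.

Lemma qq_gt0 s : 0 < qq s.
Proof. by rewrite /qq exprn_gt0 // invr_gt0. Qed.

Lemma qq_le1 s : qq s <= 1.
Proof. by rewrite /qq exprn_ile1 // ?invr_ge0 // invf_le1 // ler1n. Qed.

Lemma qqS m : qq m.+2 = (2^-1) ^+ m.+1.
Proof. by []. Qed.

Lemma prob0_ge0 s t : 0 <= prob0 s t.
Proof.
rewrite /prob0; case: ifP => // _; case: ifP => _; first by rewrite subr_ge0 qq_le1.
by case: ifP => _ //; rewrite ltW // qq_gt0.
Qed.

Lemma prob0_le1 s t : prob0 s t <= 1.
Proof.
rewrite /prob0; case: ifP => // _; case: ifP => _.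
  by rewrite lerBlDr lerDl ltW // qq_gt0.
by case: ifP => _ //; rewrite qq_le1.
Qed.

Lemma trans_total0 (s : nat) : exists t : nat, (if (s <= 1)%N then (2 <= t)%N else (t <= 1)%N).
Proof. case: (s <= 1)%N; first by exists 2%N. by exists 0%N. Qed.

Lemma prob_distr0 (s : nat) : ~~ (s <= 1)%N -> is_distr (prob0 s).
Proof.
move=> s1; split; first exact: prob0_ge0.
have -> : (\esum_(x in [set: nat]) (prob0 s x)%:E =
   \esum_(x in [set: nat]) ((if x == 0%N then 1 - qq s else 0)%:E +
                           (if x == 1%N then qq s else 0)%:E))%E.
  apply: eq_esum => t _; rewrite /prob0 (negbTE s1).
  by case: t => [|[|t]] /=; rewrite ?add0e ?adde0.
rewrite esumD; first last.
- by move=> t _; case: ifP => _; rewrite lee_fin // ltW // qq_gt0.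
- by move=> t _; case: ifP => _; rewrite lee_fin // subr_ge0 qq_le1.
rewrite !esum_pt ?subr_ge0 ?qq_le1 ?ltW ?qq_gt0 //.
by rewrite -EFinD subrK.
Qed.

Lemma prob_succ0 (s t : nat) : ~~ (s <= 1)%N -> prob0 s t != 0 ->
  (if (s <= 1)%N then (2 <= t)%N else (t <= 1)%N).
Proof.
move=> s1; rewrite /prob0 (negbTE s1) /=.
by case: t => [|[|t]] //=; rewrite eqxx.
Qed.

Definition MM : MDP R := @Build_MDP R nat (fun s => (s <= 1)%N)
  (fun s t => (if (s <= 1)%N then (2 <= t)%N else (t <= 1)%N))
  trans_total0 prob0 prob_distr0 prob_succ0.


Local Notation M := MM.

Definition step (sigma : strat M) (h : seq nat) (t : nat) : R :=
  if (last 0%N h <= 1)%N then sigma h t else prob0 (last 0%N h) t.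

Lemma cylp_rcons (sigma : strat M) pre cur r t :
  cylp sigma pre cur (rcons r t) = cylp sigma pre cur r *
   (if (last cur r <= 1)%N then sigma (pre ++ cur :: r) t else prob0 (last cur r) t).
Proof.
elim: r pre cur => [|y r IH] pre cur /=.
  by rewrite mul1r mulr1 cats1.
rewrite IH mulrA; congr (_ * (if _ then sigma _ t else _)).
by rewrite cat_rcons.
Qed.

Lemma pcyl_rcons (sigma : strat M) h t : h != [::] ->
  pcyl sigma 0%N (rcons h t) = pcyl sigma 0%N h * step sigma h t.
Proof.
case: h => [//|x r] _; rewrite rcons_cons /pcyl cylp_rcons mulrA /step /=.
by [].
Qed.

Lemma pcyl_nil (sigma : strat M) : pcyl sigma 0%N [::] = 1.
Proof. by []. Qed.

Lemma pcyl_one (sigma : strat M) x : pcyl sigma 0%N [:: x] = (x == 0%N)%:R.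
Proof. by rewrite /pcyl /= mulr1. Qed.

Definition step_ok (sigma : strat M) :=
  forall h t, h != [::] -> 0 <= step sigma h t <= 1.

Lemma pcyl_bounds (sigma : strat M) : step_ok sigma ->
  forall h, 0 <= pcyl sigma 0%N h <= 1.
Proof.
move=> Hs; elim/last_ind => [|h t IH]; first by rewrite pcyl_nil lexx ler01.
have [->|hn] := eqVneq h [::].
  by change (rcons [::] t) with [:: t]; rewrite pcyl_one; case: eqP; rewrite ?lexx ?ler01.
rewrite pcyl_rcons //; case/andP: IH => a0 a1; case/andP: (Hs h t hn) => b0 b1.
by rewrite mulr_ge0 //= mulr_ile1.
Qed.

Lemma pcyl_mono (sigma : strat M) : step_ok sigma ->
  forall x h, prefix x h -> pcyl sigma 0%N h <= pcyl sigma 0%N x.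
Proof.
move=> Hs x h /prefixP [d ->]; elim/last_ind: d => [|d t IH]; first by rewrite cats0.
rewrite -rcons_cat.
have [e0|hn] := eqVneq (x ++ d) [::].
  have -> : x = [::] by case: (x) e0.
  by rewrite pcyl_nil; case/andP: (pcyl_bounds Hs (rcons ([::] ++ d) t)).
rewrite pcyl_rcons //; apply: le_trans IH.
case/andP: (pcyl_bounds Hs (x ++ d)) => a0 a1; case/andP: (Hs _ t hn) => b0 b1.
by rewrite ler_piMr.
Qed.


Definition Cov (sigma : strat M) (A : set (play M)) (b : \bar R) :=
  exists c : nat -> seq nat, A `<=` \bigcup_(i in [set: nat]) @cyl R M (c i) /\
    (\esum_(i in [set: nat]) (pcyl sigma 0%N (c i))%:E <= b)%E.

Lemma Cov_Prob sigma A b : Cov sigma A b -> (Prob sigma 0%N A <= b)%E.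
Proof.
move=> [c [Ac Hc]]; apply: le_trans Hc; apply: ereal_inf_lbound.
by exists c.
Qed.

Lemma Cov_sub sigma A B b : A `<=` B -> Cov sigma B b -> Cov sigma A b.
Proof. by move=> AB [c [Bc Hc]]; exists c; split => //; apply: subset_trans Bc. Qed.

Lemma Cov_le sigma A b b' : (b <= b')%E -> Cov sigma A b -> Cov sigma A b'.
Proof. by move=> bb [c [Ac Hc]]; exists c; split => //; apply: le_trans bb. Qed.

Lemma Cov_single sigma h : step_ok sigma -> Cov sigma (@cyl R M h) (pcyl sigma 0%N h)%:E.
Proof.
move=> Hs; exists (fun i => if i == 0%N then h else [:: 1%N]); split.
  by move=> p hp; exists 0%N.
rewrite (@esum_supp0 (fun i => pcyl sigma 0 (if i == 0%N then h else [:: 1%N]))) //.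
- by move=> t /negbTE ->; rewrite pcyl_one.
- by case/andP: (pcyl_bounds Hs h).
Qed.

Lemma Cov_union sigma (Hs : step_ok sigma) (A : nat -> set (play M)) (b : nat -> \bar R) :
  (forall i, Cov sigma (A i) (b i)) ->
  Cov sigma (\bigcup_(i in [set: nat]) A i) (\esum_(i in [set: nat]) b i)%E.
Proof.
move=> H; have [cc Hcc] := choice H.
pose c n := if @pickle_inv (prod nat nat) n is Some ij then cc ij.1 ij.2 else [:: 1%N].
exists c; split.
  move=> p [i _ /(proj1 (Hcc i)) [j _ hj]]; exists (pickle (i, j)) => //.
  by rewrite /c pickleK_inv.
have P0 : forall h, (0 <= (pcyl sigma 0%N h)%:E)%E.
  by move=> h; rewrite lee_fin; case/andP: (pcyl_bounds Hs h).
rewrite (esumID (range (@pickle (prod nat nat)))); last by move=> *; exact: P0.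
rewrite [X in (_ + X)%E]esum1 ?adde0; last first.
  move=> n [_ /= nr]; rewrite /c; case E: (pickle_inv n) => [x|].
    by exfalso; apply: nr; exists x => //; have := @pickle_invK (prod nat nat) n; rewrite E.
  by rewrite pcyl_one.
rewrite setTI esum_image; last by move=> x y _ _; apply: (pcan_inj pickleK_inv).
have -> : (\esum_(i in [set: nat * nat]) (pcyl sigma 0%N (c (pickle i)))%:E =
   \esum_(i in [set: nat] `*`` (fun=> [set: nat])) (pcyl sigma 0%N (cc i.1 i.2))%:E)%E.
  have -> : [set: nat] `*`` (fun=> [set: nat]) = [set: nat * nat].
    by apply/seteqP; split => // -[i j].
  by apply: eq_esum => -[i j] _; rewrite /c pickleK_inv.
rewrite -(@esum_esum _ _ _ [set: nat] (fun=> [set: nat]) (fun i j => (pcyl sigma 0%N (cc i j))%:E)); last by move=> *; exact: P0.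
by apply: le_esum => i _; case: (Hcc i).
Qed.


Lemma prefix_rconsE (x h : seq nat) t :
  prefix x (rcons h t) = prefix x h || (x == rcons h t).
Proof.
elim: h x => [|y h IH] x.
  by change (rcons [::] t) with [:: t]; rewrite prefixs1 prefixs0.
case: x => [|a x]; first by rewrite !prefix0s.
by rewrite rcons_cons !prefix_cons IH eqseq_cons andb_orr.
Qed.

Lemma prefix_rconsl (x h : seq nat) t : prefix (rcons h t) x -> prefix h x.
Proof. by apply: prefix_trans; apply: prefix_rcons. Qed.

Lemma prefix_rcons2 (x h : seq nat) t0 t1 :
  prefix (rcons h t0) x -> prefix (rcons h t1) x -> t0 = t1.
Proof.
rewrite !prefixE !size_rcons => /eqP E0 /eqP E.
by have := congr1 (last 0%N) (etrans (esym E0) E); rewrite !last_rcons.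
Qed.

Lemma count_rcons_ (p : pred nat) h t : count p (rcons h t) = (count p h + p t)%N.
Proof. by rewrite -cats1 count_cat /= addn0. Qed.

Lemma dsucc_ok (m : nat) (s : St M) : player s -> trans s ((fun (m : nat) (_ : nat) => m.+2) m s).
Proof. by move=> /= ->. Qed.

Definition HDT : HDtransducer M :=
  @Build_HDtransducer R M nat 0%N (fun m s => (m + (1 < s))%N) (fun m _ => m.+2) dsucc_ok.

Definition sigmaH : strat M := HD_strategy HDT.

Definition rc (h : seq nat) := count (fun s => (1 < s)%N) h.
Definition Bc (h : seq nat) := count (pred1 1%N) h.

Lemma foldl_cnt a (l : seq nat) :
  foldl (fun m s => (m + (1 < s))%N) a l = (a + rc l)%N.
Proof. by elim: l a => [|y l IH] a /=; rewrite ?addn0 // IH addnA. Qed.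

Lemma hd_step h t : h != [::] ->
  step sigmaH h t = if (last 0%N h <= 1)%N then (t == (rc h).+2)%:R
                    else prob0 (last 0%N h) t.
Proof.
case: h => [//|x r] _; rewrite /step; case: ifP => // hl.
rewrite /sigmaH /HD_strategy /= foldl_cnt add0n.
have -> : ((1 < x) + rc r)%N = rc (belast x r).
  change ((1 < x) + rc r)%N with (rc (x :: r)).
  by rewrite lastI /rc count_rcons_ /= ltnNge hl addn0.
by [].
Qed.

Lemma hd_ok : step_ok sigmaH.
Proof.
move=> h t hn; rewrite hd_step //; case: ifP => _.
  by case: eqP; rewrite ?lexx ?ler01.
by rewrite prob0_ge0 prob0_le1.
Qed.

Local Notation P := (pcyl sigmaH 0%N).

Lemma P_ge0 h : 0 <= P h. Proof. by case/andP: (pcyl_bounds hd_ok h). Qed.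

Section HDlow.
Variable c : nat -> seq nat.
Variable eps : R.
Hypothesis eps0 : 0 < eps.

Definition mm (h x : seq nat) : R :=
  if prefix x h then P h else if prefix h x then P x else 0.

Lemma mm_ge0 h x : 0 <= mm h x.
Proof. by rewrite /mm; case: ifP => _; rewrite ?P_ge0 //; case: ifP => _; rewrite ?P_ge0. Qed.

Lemma mm_leP h x : mm h x <= P x.
Proof.
rewrite /mm; case: ifP => hx; first exact: pcyl_mono hd_ok _ _ hx.
by case: ifP => _; rewrite ?P_ge0.
Qed.

Lemma mm_rcons_le h t x : P (rcons h t) = P h -> mm (rcons h t) x <= mm h x.
Proof.
move=> PE; rewrite /mm prefix_rconsE; case hx: (prefix x h) => /=; first by rewrite PE.
case: eqP => [->|_] /=; first by rewrite prefix_rcons.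
case: ifP => hx2; last by case: ifP => _; rewrite ?P_ge0.
by rewrite (prefix_rconsl hx2).
Qed.

Lemma mm_rcons_np h t x : ~~ prefix x h ->
  mm (rcons h t) x = if prefix (rcons h t) x then P x else 0.
Proof.
move=> /negbTE hx; rewrite /mm prefix_rconsE hx /=.
by case: eqP => [->|//]; rewrite prefix_refl.
Qed.

Lemma mm_rcons2 h t0 t1 x : t0 != t1 -> P (rcons h t0) + P (rcons h t1) = P h ->
  mm (rcons h t0) x + mm (rcons h t1) x <= mm h x.
Proof.
move=> tt PE; case hx: (prefix x h).
  by rewrite /mm !prefix_rconsE hx /= PE.
rewrite !mm_rcons_np ?hx //.
case h0: (prefix (rcons h t0) x); case h1: (prefix (rcons h t1) x).
- by rewrite (prefix_rcons2 h0 h1) eqxx in tt.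
- by rewrite addr0 /mm hx (prefix_rconsl h0).
- by rewrite add0r /mm hx (prefix_rconsl h1).
- by rewrite addr0 mm_ge0.
Qed.

Definition W (h : seq nat) : R :=
  (2^-1) ^+ rc h + (if (1 < last 0%N h)%N then qq (last 0%N h) else 0).
Definition Z (h : seq nat) : R := (Bc h)%:R + W h.
Definition nu (h : seq nat) : \bar R := (\esum_(i in [set: nat]) (mm h (c i))%:E)%E.
Definition Inv (h : seq nat) := (nu h + (eps * P h * Z h)%:E < (P h)%:E)%E.

Lemma W_ge0 h : 0 <= W h.
Proof.
rewrite /W; apply: addr_ge0; first by rewrite exprn_ge0 // invr_ge0.
by case: ifP => _ //; rewrite ltW ?qq_gt0.
Qed.
Lemma Z_ge0 h : 0 <= Z h.
Proof. by rewrite /Z addr_ge0 ?W_ge0. Qed.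
Lemma nu_ge0 h : (0 <= nu h)%E.
Proof. by apply: esum_ge0 => i _; rewrite lee_fin mm_ge0. Qed.

Lemma Inv_player h : h != [::] -> (last 0%N h <= 1)%N -> Inv h -> Inv (rcons h (rc h).+2).
Proof.
move=> hn hl; rewrite /Inv.
have PE : P (rcons h (rc h).+2) = P h by rewrite pcyl_rcons // hd_step // hl eqxx mulr1.
have ZE : Z (rcons h (rc h).+2) = Z h.
  rewrite /Z /W /Bc /rc !count_rcons_ last_rcons /= addn0 /=.
  rewrite ltnNge hl /= qqS addn1 exprS; by field.
rewrite PE ZE; apply: le_lt_trans; rewrite leeD2r //.
by apply: le_esum => i _; rewrite lee_fin mm_rcons_le.
Qed.

Lemma Inv_random h : h != [::] -> (1 < last 0%N h)%N -> Inv h ->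
  Inv (rcons h 0%N) \/ Inv (rcons h 1%N).
Proof.
move=> hn hl Ih; set l := last 0%N h.
have nl : ~~ (l <= 1)%N by rewrite -ltnNge.
have P0 : P (rcons h 0%N) = P h * (1 - qq l).
  by rewrite pcyl_rcons // hd_step // (negbTE nl) /prob0 (negbTE nl).
have P1 : P (rcons h 1%N) = P h * qq l.
  by rewrite pcyl_rcons // hd_step // (negbTE nl) /prob0 (negbTE nl).
have Z0 : Z (rcons h 0%N) = (Bc h)%:R + (2^-1) ^+ rc h.
  by rewrite /Z /W /Bc /rc !count_rcons_ last_rcons /= !addn0 addr0.
have Z1 : Z (rcons h 1%N) = (Bc h)%:R + 1 + (2^-1) ^+ rc h.
  by rewrite /Z /W /Bc /rc !count_rcons_ last_rcons /= !addn0 addr0 addn1 natr1 -?addrA.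
have ZE : Z h = (Bc h)%:R + (2^-1) ^+ rc h + qq l.
  by rewrite /Z /W -/l hl addrA.
apply: contrapT => /not_orP [/negP N0 /negP N1].
rewrite -leNgt in N0; rewrite -leNgt in N1.
move: Ih; rewrite /Inv; apply/negP; rewrite -leNgt.
have nuE : (nu (rcons h 0%N) + nu (rcons h 1%N) <= nu h)%E.
  rewrite /nu -esumD; last 2 first.
    by move=> i _; rewrite lee_fin mm_ge0.
    by move=> i _; rewrite lee_fin mm_ge0.
  apply: le_esum => i _; rewrite -EFinD lee_fin mm_rcons2 //.
  by rewrite P0 P1 -mulrDr subrK mulr1.
have -> : P h = P (rcons h 0%N) + P (rcons h 1%N) by rewrite P0 P1 -mulrDr subrK mulr1.
rewrite EFinD; apply: le_trans (leeD N0 N1) _.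
rewrite addeACA; apply: le_trans (leeD nuE (lexx _)); rewrite leeD2l // -EFinD lee_fin.
rewrite P0 P1 Z0 Z1 ZE le_eqVlt; apply/orP; left; apply/eqP; ring.
Qed.

End HDlow.


Definition Col (s : St M) : nat := (s == 1%N).

Lemma Col_le1 s : (Col s <= 1)%N.
Proof. by rewrite /Col; case: (s == 1%N). Qed.

Lemma parity_of (p : play M) :
  (exists K, forall n, (count (pred1 1%N) (mkseq p n) <= K)%N) ->
  Parity Col p.
Proof.
move=> [K HK].
have NIO : ~ inf_often Col p 1.
  move=> IO.
  have cntS m : count (pred1 1%N) (mkseq p m.+1) = (count (pred1 1%N) (mkseq p m) + (p m == 1%N))%N.
    by rewrite mkseqS count_rcons_.
  have cntM m m' : (m <= m')%N -> (count (pred1 1%N) (mkseq p m) <= count (pred1 1%N) (mkseq p m'))%N.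
    elim: m' => [|m' IH]; first by rewrite leqn0 => /eqP ->.
    rewrite leq_eqVlt => /orP [/eqP -> //|]; rewrite ltnS => /IH.
    by rewrite cntS => /leq_trans; apply; apply: leq_addr.
  have big k : exists n, (k <= count (pred1 1%N) (mkseq p n))%N.
    elim: k => [|k [n Hn]]; first by exists 0%N.
    have [m [nm Cm]] := IO n.
    exists m.+1; rewrite cntS.
    have -> : (p m == 1%N) by move: Cm; rewrite /Col; case: (p m == 1%N).
    by rewrite addn1 ltnS (leq_trans Hn) // cntM.
  have [n Hn] := big K.+1.
  by have := leq_trans Hn (HK n); rewrite ltnn.
have [N HN] : exists N, forall n, (N <= n)%N -> Col (p n) <> 1%N.
  apply: contrapT => H1; apply: NIO => N; apply: contrapT => H2; apply: H1.
  by exists N => n Nn C1; apply: H2; exists n.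
exists 0%N; split => //; split.
  move=> N'; exists (maxn N N'); split; first by rewrite leq_maxr.
  have := HN (maxn N N') (leq_maxl _ _); have := Col_le1 (p (maxn N N')).
  by case: (Col _) => [|[|]].
move=> c' c'0 IO; have [n [nN Cn]] := IO N; clear IO.
case: c' c'0 Cn => [//|[|c']] _ Cn; first by apply: (HN n).
by have := Col_le1 (p n); rewrite Cn.
Qed.


Lemma cyl_mkseq (h : seq nat) (p : play M) : @cyl R M h p -> h = mkseq p (size h).
Proof.
move=> ch; apply: (@eq_from_nth _ 0%N); first by rewrite size_mkseq.
move=> j jh; rewrite nth_mkseq // (ch j jh).
by apply: set_nth_default.
Qed.

Lemma HD_lower (c : nat -> seq nat) :
  Parity Col `<=` \bigcup_(i in [set: nat]) @cyl R M (c i) ->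
  (1 <= \esum_(i in [set: nat]) (P (c i))%:E)%E.
Proof.
move=> Hc; rewrite leNgt; apply/negP => HS.
set S := (\esum_(i in [set: nat]) (P (c i))%:E)%E in HS.
have S0 : (0 <= S)%E by apply: esum_ge0 => i _; rewrite lee_fin P_ge0.
have Sfin : S \is a fin_num by rewrite ge0_fin_numE // (lt_trans HS) // ltry.
set x := fine S; have Sx : S = x%:E by rewrite /x fineK.
have x1 : x < 1 by rewrite -lte_fin -Sx.
set eps := (1 - x) / 2.
have eps0 : 0 < eps by rewrite /eps divr_gt0 // subr_gt0.
have init : Inv c eps [:: 0%N].
  rewrite /Inv pcyl_one eqxx /Z /W /Bc /rc /= expr0 addr0 add0r mulr1 mulr1.
  apply: (@le_lt_trans _ _ (x + eps)%:E).
    rewrite EFinD leeD2r // -Sx /nu; apply: le_esum => i _; rewrite lee_fin.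
    exact: mm_leP.
  by rewrite lte_fin /eps; lra.
have stepE : forall h, exists t, h != [::] -> Inv c eps h -> Inv c eps (rcons h t).
  move=> h; case: (pselect (h != [::] /\ Inv c eps h)) => [[hn Ih]|nh]; last first.
    by exists 0%N => hn Ih; exfalso; apply: nh.
  have [hl|hl] := leqP (last 0%N h) 1.
    by exists (rc h).+2 => _ _; apply: Inv_player.
  have [I0|I1] := Inv_random hn hl Ih.
    by exists 0%N.
  by exists 1%N.
have [g Hg] := choice stepE.
pose H n := iter n (fun h => rcons h (g h)) [:: 0%N].
have Hn n : H n != [::] by case: n => [|n] //=; rewrite -size_eq0 size_rcons.
have HI n : Inv c eps (H n).
  by elim: n => [|n IH] //=; apply: Hg.
pose p : play M := fun n => last 0%N (H n).
have HM n : H n = mkseq p n.+1.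
  elim: n => [|n IH] //; rewrite mkseqS -IH /p /=.
  by rewrite last_rcons.
have notc i : ~ @cyl R M (c i) p.
  move=> ci; set n := size (c i).
  have pre : prefix (c i) (H n).
    rewrite HM mkseqS -cats1 prefixE take_size_cat ?size_mkseq //.
    by rewrite -(cyl_mkseq ci).
  have := HI n; rewrite /Inv; apply/negP; rewrite -leNgt.
  apply: (@le_trans _ _ (nu c (H n))).
    have := esum_ge1 (a := fun i => (mm (H n) (c i))%:E) (i := i).
    rewrite /mm pre lee_fin P_ge0 => /(_ isT) //.
  rewrite leeDl // lee_fin mulr_ge0 ?Z_ge0 // mulr_ge0 ?P_ge0 //; exact: ltW.
have par : Parity Col p.
  apply: parity_of; exists (Num.trunc eps^-1) => n.
  have Bn : (count (pred1 1%N) (mkseq p n) <= Bc (H n))%N.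
    by rewrite HM /Bc mkseqS count_rcons_ leq_addr.
  apply: (leq_trans Bn); rewrite truncn_ge_nat ?invr_ge0 ?ltW //.
  have := HI n; rewrite /Inv => Ih.
  have Pp : 0 < P (H n).
    rewrite -lte_fin; apply: le_lt_trans Ih; rewrite adde_ge0 ?nu_ge0 // lee_fin.
    by rewrite mulr_ge0 ?Z_ge0 // mulr_ge0 ?P_ge0 // ltW.
  have : eps * P (H n) * Z (H n) < P (H n).
    rewrite -lte_fin; apply: le_lt_trans Ih; rewrite leeDr ?nu_ge0 //.
  rewrite mulrAC -[X in _ < X]mul1r ltr_pM2r // => eZ.
  rewrite -(ltr_pM2l eps0) divff ?gt_eqF //; apply: le_lt_trans eZ.
  by apply: ler_wpM2l; [exact: ltW | rewrite /Z lerDl W_ge0].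
have [i _ ci] := Hc p par.
by apply: (notc i).
Qed.


Lemma HD_prob : Prob sigmaH 0%N (Parity Col) = 1%E.
Proof.
apply/eqP; rewrite eq_le; apply/andP; split.
  apply: Cov_Prob; apply: (Cov_sub (B := @cyl R M [::])) => //.
  by have := Cov_single [::] hd_ok; rewrite pcyl_nil.
apply: le_ereal_inf_tmp => _ [c Hc <-]; exact: HD_lower.
Qed.

Lemma pow_small (d e : R) : 0 < d -> d <= 1 -> 0 < e -> exists n, (1 - d) ^+ n <= e.
Proof.
move=> d0 d1 e0.
have B n : (1 - d) ^+ n * (1 + n%:R * d) <= 1.
  elim: n => [|n IH]; first by rewrite expr0 mul0r addr0 mulr1.
  have a0 : 0 <= (1 - d) ^+ n by rewrite exprn_ge0 // subr_ge0.
  have k0 : 0 <= n%:R :> R by [].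
  have H1 : (1 - d) * (1 + n.+1%:R * d) <= 1 + n%:R * d.
    rewrite -addn1 natrD; nra.
  apply: le_trans IH.
  have -> : (1 - d) ^+ n.+1 * (1 + n.+1%:R * d) = (1 - d) ^+ n * ((1 - d) * (1 + n.+1%:R * d)).
    by rewrite exprS; ring.
  by apply: ler_wpM2l.
exists (Num.trunc (e * d)^-1).+1.
set n := (Num.trunc (e * d)^-1).+1.
have nlt : (e * d)^-1 < n%:R by apply: truncnS_gt.
have ed0 : 0 < e * d by rewrite mulr_gt0.
have H2 : 1 < e * d * n%:R.
  by rewrite -(ltr_pM2l ed0) mulfV ?gt_eqF // in nlt.
have pos : 0 < 1 + n%:R * d by rewrite ltr_wpDr // mulr_ge0 // ltW.
have := B n; rewrite -ler_pdivlMr // => /le_trans; apply.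
rewrite ler_pdivrMr //; nra.
Qed.

Section FR.
Variable T : FRtransducer M.
Local Notation sF := (FR_strategy T).
Local Notation PF := (pcyl sF 0%N).

Lemma memdist_ok w : (forall m, 0 <= memdist (T:=T) w m) /\ \sum_m memdist (T:=T) w m = 1.
Proof.
have gen : forall (w : seq nat) (d : Defs.Mem T -> R),
    (forall m, 0 <= d m) /\ \sum_m d m = 1 ->
    let d' := foldl (fun (d : Defs.Mem T -> R) (s : St M) (m' : Defs.Mem T) =>
                       \sum_m d m * upd m s m') d w in
    (forall m, 0 <= d' m) /\ \sum_m d' m = 1.
  clear w; elim => [//|s w IH] d [d0 d1] /=.
  apply: IH; split.
    by move=> m'; apply: sumr_ge0 => m _; rewrite mulr_ge0 //; case: (upd_distr m s).
  rewrite exchange_big /= -[RHS]d1; apply: eq_bigr => m _.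
  by rewrite -mulr_sumr; case: (upd_distr m s) => _ ->; rewrite mulr1.
apply: gen; split; first by move=> m; case: eqP.
by rewrite (bigD1 (m0 T)) //= eqxx big1 ?addr0 // => m /negbTE ->.
Qed.


Lemma succ_facts (m : Defs.Mem T) (p : nat) : (p <= 1)%N ->
  [/\ forall t, 0 <= succ m p t, forall t, succ m p t <= 1,
      (\esum_(t in [set: nat]) (succ m p t)%:E = 1)%E &
      forall t, (t <= 1)%N -> succ m p t = 0].
Proof.
move=> hp; have [g0 g1] := @succ_distr R M T m p hp.
split => // t.
- by rewrite -lee_fin -g1; apply: esum_ge1; rewrite lee_fin.
- move=> t1; apply/eqP; apply: contraTT t1 => /(@succ_succ R M T m p t hp) /=.
  by rewrite hp -ltnNge.
Qed.

Lemma sF_facts h : h != [::] -> (last 0%N h <= 1)%N ->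
  (forall t, 0 <= sF h t <= 1) /\ (forall t, (t <= 1)%N -> sF h t = 0).
Proof.
case: h => [//|x r] _ hl; rewrite /FR_strategy.
have [mu0 mu1] := memdist_ok (belast x r).
split => t.
  rewrite sumr_ge0 /=; last by move=> m _; case: (succ_facts m hl) => *; rewrite mulr_ge0.
  rewrite -[X in _ <= X]mu1; apply: ler_sum => m _.
  by case: (succ_facts m hl) => _ s1 _ _; rewrite ler_piMr.
by move=> t1; apply: big1 => m _; case: (succ_facts m hl) => _ _ _ ->; rewrite ?mulr0.
Qed.

Lemma fr_ok : step_ok sF.
Proof.
move=> h t hn; rewrite /step; case: ifP => hl; first by case: (sF_facts hn hl).
by rewrite prob0_ge0 prob0_le1.
Qed.

Definition f' (t : nat) : R := if (1 < t)%N then 1 - qq t else 0.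

Lemma f'_ge0 t : 0 <= f' t.
Proof. by rewrite /f'; case: ifP => _ //; rewrite subr_ge0 qq_le1. Qed.

Lemma f'_lt1 t : 0 < 1 - f' t.
Proof. by rewrite /f'; case: ifP => _; rewrite ?subr0 ?ltr01 // opprB addrC subrK qq_gt0. Qed.

Lemma succ_bound (m : Defs.Mem T) p : (p <= 1)%N -> exists d : R, 0 < d /\ d <= 1 /\
  (\esum_(t in [set: nat]) (succ m p t * f' t)%:E <= (1 - d)%:E)%E.
Proof.
move=> hp; have [g0 g1 gE _] := succ_facts m hp.
have [t0 nz] : exists t0, succ m p t0 != 0.
  apply: contrapT => H.
  have : (\esum_(t in [set: nat]) (succ m p t)%:E = 0)%E.
    apply: esum1 => t _; congr EFin.
    by apply/eqP; apply: contrapT => /negP nt; apply: H; exists t.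
  by rewrite gE => /eqP; rewrite eqe oner_eq0.
have gp : 0 < succ m p t0 by rewrite lt_def nz g0.
exists (succ m p t0 * (1 - f' t0)); split; first by rewrite mulr_gt0 // f'_lt1.
split.
  apply: le_trans (g1 t0); rewrite ler_piMr //.
  by rewrite lerBlDr lerDl f'_ge0.
set A := (\esum_(t in [set: nat]) (succ m p t * f' t)%:E)%E.
set B := (\esum_(t in [set: nat]) (succ m p t * (1 - f' t))%:E)%E.
have AB : (A + B = 1)%E.
  rewrite /A /B -esumD; last 2 first.
  - by move=> t _; rewrite lee_fin mulr_ge0 // f'_ge0.
  - by move=> t _; rewrite lee_fin mulr_ge0 // ltW // f'_lt1.
  by rewrite -gE; apply: eq_esum => t _; rewrite -EFinD -mulrDr addrC subrK mulr1.
have Bd : ((succ m p t0 * (1 - f' t0))%:E <= B)%E.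
  by apply: (esum_ge1 (a := fun t => (succ m p t * (1 - f' t))%:E)); rewrite lee_fin mulr_ge0 // ltW // f'_lt1.
have A0 : (0 <= A)%E by apply: esum_ge0 => t _; rewrite lee_fin mulr_ge0 // f'_ge0.
have Afin : A \is a fin_num.
  rewrite ge0_fin_numE //; apply: (@le_lt_trans _ _ 1%E); last exact: ltry.
  rewrite -AB leeDl //; apply: le_trans Bd.
  by rewrite lee_fin mulr_ge0 // ltW // f'_lt1.
rewrite EFinB leeBrDr //; apply: le_trans (leeD (lexx A) Bd) _; by rewrite AB.
Qed.


Lemma dd_ex : forall mp : Defs.Mem T * nat, exists d : R, (mp.2 <= 1)%N -> 0 < d /\ d <= 1 /\
  (\esum_(t in [set: nat]) (succ mp.1 mp.2 t * f' t)%:E <= (1 - d)%:E)%E.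
Proof.
move=> [m p] /=; have [hp|hp] := leqP p 1.
  by have [d Hd] := succ_bound m hp; exists d.
by exists 1.
Qed.

Definition dd := projT1 (choice dd_ex).
Lemma ddP mp : (mp.2 <= 1)%N -> 0 < dd mp /\ dd mp <= 1 /\
  (\esum_(t in [set: nat]) (succ mp.1 mp.2 t * f' t)%:E <= (1 - dd mp)%:E)%E.
Proof. exact: (projT2 (choice dd_ex) mp). Qed.

Definition delta : R := \big[Num.min/1]_(m : Defs.Mem T) Num.min (dd (m, 0%N)) (dd (m, 1%N)).

Lemma delta_pos : 0 < delta /\ delta <= 1.
Proof.
rewrite /delta; apply: (big_ind (fun x : R => 0 < x /\ x <= 1)).
- by rewrite ltr01 lexx.
- move=> x y [x0 x1] [y0 y1]; split; first by rewrite lt_min x0 y0.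
  by rewrite ge_min x1.
- move=> m _; have [a0 [a1 _]] := ddP (mp := (m, 0%N)) isT; have [b0 [b1 _]] := ddP (mp := (m, 1%N)) isT.
  by split; [rewrite lt_min a0 b0 | rewrite ge_min a1].
Qed.

Lemma delta_le m p : (p <= 1)%N -> delta <= dd (m, p).
Proof.
move=> hp; rewrite /delta (bigD1 m) //= ge_min; apply/orP; left.
rewrite ge_min; case: p hp => [|[|]] //= _; first by rewrite lexx.
by rewrite lexx orbT.
Qed.

Lemma sig_bound h : h != [::] -> (last 0%N h <= 1)%N ->
  (\esum_(t in [set: nat]) (sF h t * f' t)%:E <= (1 - delta)%:E)%E.
Proof.
case: h => [//|x r] _ hl; rewrite /FR_strategy.
have [mu0 mu1] := memdist_ok (belast x r).
set mu := memdist (T:=T) (belast x r).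
have -> : (\esum_(t in [set: nat]) ((\sum_m mu m * succ m (last x r) t) * f' t)%:E =
   \esum_(t in [set: nat]) \sum_m ((mu m)%:E * (succ m (last x r) t * f' t)%:E))%E.
  apply: eq_esum => t _; rewrite mulr_suml -sumEFin; apply: eq_bigr => m _.
  by rewrite -EFinM mulrA.
rewrite esum_sum; last first.
  by move=> t m _ _; rewrite -EFinM lee_fin mulr_ge0 ?mulr_ge0 ?f'_ge0 //; case: (succ_facts m hl).
apply: (@le_trans _ _ (\sum_m (mu m * (1 - delta))%:E)%E).
  apply: lee_sum => m _.
  apply: le_trans (esum_scale _ _) _ => //.
    by move=> t; rewrite lee_fin mulr_ge0 ?f'_ge0 //; case: (succ_facts m hl).
  rewrite EFinM; apply: lee_wpmul2l; first by rewrite lee_fin.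
  have [_ [_ H]] := ddP (mp := (m, last x r)) hl.
  apply: le_trans H _; rewrite lee_fin lerB // delta_le //.
by rewrite sumEFin -mulr_suml mu1 mul1r.
Qed.


Definition G (h : seq nat) (M0 : nat) : set (play M) :=
  @cyl R M h `&` [set p | forall j, (M0 <= j)%N -> p j != 1%N].

Lemma cyl_rcons (h : seq nat) (p : play M) :
  @cyl R M h p -> @cyl R M (rcons h (p (size h))) p.
Proof.
move=> ch i; rewrite size_rcons ltnS leq_eqVlt => /orP [/eqP ->|ih].
  by rewrite nth_rcons ltnn eqxx.
by rewrite nth_rcons ih; apply: ch.
Qed.

Lemma G_split h M0 : G h M0 `<=` \bigcup_(t in [set: nat]) G (rcons h t) M0.
Proof. by move=> p [ch hp]; exists (p (size h)) => //; split => //; apply: cyl_rcons. Qed.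

Lemma G_sub_cyl h M0 : G h M0 `<=` @cyl R M h.
Proof. by move=> p []. Qed.

Lemma G1_empty h M0 : (M0 <= size h)%N -> G (rcons h 1%N) M0 `<=` set0.
Proof.
move=> hM p [ch hp]; have := ch (size h); rewrite size_rcons ltnSn nth_rcons ltnn eqxx.
by move=> /(_ isT) E; move: (hp _ hM); rewrite E.
Qed.

Lemma PF_ge0 h : 0 <= PF h. Proof. by case/andP: (pcyl_bounds fr_ok h). Qed.
Lemma PF_le1 h : PF h <= 1. Proof. by case/andP: (pcyl_bounds fr_ok h). Qed.

Lemma Cov_zero h (A : set (play M)) (b : \bar R) : PF h = 0 -> A `<=` @cyl R M h ->
  (0 <= b)%E -> Cov sF A b.
Proof.
move=> P0 Ah b0; apply: Cov_le b0 _; apply: Cov_sub Ah _.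
by have := Cov_single h fr_ok; rewrite P0.
Qed.

Lemma Cov_empty (b : \bar R) : (0 <= b)%E -> Cov sF set0 b.
Proof. by move=> b0; apply: (@Cov_zero [:: 1%N]) => //; rewrite pcyl_one. Qed.

Lemma eps_sum (A : nat -> R) (e : R) : (forall t, 0 <= A t) -> 0 <= e ->
  (\esum_(t in [set: nat]) ((A t)%:E + (e / (2 ^ t.+1)%:R)%:E) <=
   \esum_(t in [set: nat]) (A t)%:E + e%:E)%E.
Proof.
move=> A0 e0; rewrite -!nneseries_esumT.
- exact: (epsilon_trick xpredT).
- by move=> n; rewrite lee_fin.
- by move=> n; rewrite adde_ge0 // lee_fin // divr_ge0.
Qed.

Definition Vn (n : nat) (h : seq nat) : R :=
  PF h * (if (1 < last 0%N h)%N then 1 - qq (last 0%N h) else 1) * (1 - delta) ^+ n.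

Definition ClaimP n := forall h M0, h != [::] -> (last 0%N h <= 1)%N -> (M0 <= size h)%N ->
  forall e, 0 < e -> Cov sF (G h M0) (Vn n h + e)%:E.
Definition ClaimR n := forall h M0, h != [::] -> (1 < last 0%N h)%N -> (M0 <= size h)%N ->
  forall e, 0 < e -> Cov sF (G h M0) (Vn n h + e)%:E.

Lemma ClaimP0 : ClaimP 0.
Proof.
move=> h M0 hn hl hM e e0; apply: Cov_sub (G_sub_cyl (M0:=M0)) _.
apply: Cov_le (Cov_single h fr_ok); rewrite lee_fin /Vn ltnNge hl /= expr0 !mulr1.
by rewrite lerDl ltW.
Qed.


Lemma delta_ge0' : 0 <= 1 - delta.
Proof. by rewrite subr_ge0; case: delta_pos. Qed.

Lemma Vn_ge0 n h : 0 <= Vn n h.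
Proof.
rewrite /Vn mulr_ge0 ?exprn_ge0 ?delta_ge0' // mulr_ge0 ?PF_ge0 //.
by case: ifP => _ //; rewrite subr_ge0 qq_le1.
Qed.

Lemma rcons_nn (h : seq nat) t : rcons h t != [::].
Proof. by rewrite -size_eq0 size_rcons. Qed.

Lemma et_pos (e : R) t : 0 < e -> 0 < e / (2 ^ t.+1)%:R.
Proof. by move=> e0; rewrite divr_gt0 // ltr0n expn_gt0. Qed.

Lemma ClaimR_of_P n : ClaimP n -> ClaimR n.
Proof.
move=> CP h M0 hn hl hM e e0; set l := last 0%N h.
have nl : ~~ (l <= 1)%N by rewrite -ltnNge.
have Pt t : PF (rcons h t) = PF h * prob0 l t by rewrite pcyl_rcons // /step (negbTE nl).
pose A t : R := if t == 0%N then Vn n h else 0.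
have hM' t : (M0 <= size (rcons h t))%N by rewrite size_rcons (leq_trans hM).
have Hc : forall t, Cov sF (G (rcons h t) M0) ((A t)%:E + (e / (2 ^ t.+1)%:R)%:E)%E.
  move=> t; have et := @et_pos e t e0.
  case: t et => [|[|t]] et.
  - rewrite /A eqxx -EFinD.
    have -> : Vn n h = Vn n (rcons h 0%N).
      by rewrite /Vn Pt last_rcons /= -/l hl /prob0 (negbTE nl) /= mulr1.
    by apply: CP => //; [exact: (rcons_nn h 0%N) | rewrite last_rcons].
  - apply: Cov_sub (G1_empty hM) _; apply: Cov_empty.
    by rewrite /A /= add0e lee_fin ltW.
  - apply: (@Cov_zero (rcons h t.+2)); last by rewrite /A /= add0e lee_fin ltW.
      by rewrite Pt /prob0 (negbTE nl) mulr0.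
    exact: G_sub_cyl.
have := Cov_union fr_ok Hc => /(Cov_sub (G_split (h:=h) (M0:=M0))).
apply: Cov_le; apply: le_trans (eps_sum _ (ltW e0)) _.
  by move=> t; rewrite /A; case: eqP => _ //; apply: Vn_ge0.
rewrite (esum_supp0 (a:=A)); first by rewrite /A eqxx -EFinD.
- by move=> t /negbTE; rewrite /A => ->.
- by rewrite /A eqxx Vn_ge0.
Qed.

Lemma ClaimP_of_R n : ClaimR n -> ClaimP n.+1.
Proof.
move=> CR h M0 hn hl hM e e0.
set K := PF h * (1 - delta) ^+ n.
have K0 : 0 <= K by rewrite mulr_ge0 ?PF_ge0 ?exprn_ge0 ?delta_ge0'.
have Pt t : PF (rcons h t) = PF h * sF h t by rewrite pcyl_rcons // /step hl.
have [sF01 sF0] := sF_facts hn hl.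
pose A t : R := K * (sF h t * f' t).
have A0 t : 0 <= A t.
  by rewrite mulr_ge0 // mulr_ge0 ?f'_ge0 //; case/andP: (sF01 t).
have hM' t : (M0 <= size (rcons h t))%N by rewrite size_rcons (leq_trans hM).
have Hc : forall t, Cov sF (G (rcons h t) M0) ((A t)%:E + (e / (2 ^ t.+1)%:R)%:E)%E.
  move=> t; have et := @et_pos e t e0.
  have [t1|t2] := leqP t 1.
    apply: (@Cov_zero (rcons h t)); first by rewrite Pt sF0 // mulr0.
      exact: G_sub_cyl.
    by rewrite adde_ge0 // lee_fin ?A0 // ltW.
  have -> : ((A t)%:E + (e / (2 ^ t.+1)%:R)%:E)%E = (Vn n (rcons h t) + e / (2 ^ t.+1)%:R)%:E.
    rewrite -EFinD; congr (EFin (_ + _)).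
    by rewrite /Vn Pt last_rcons t2 /A /f' t2 /K; ring.
  by apply: CR => //; [apply: rcons_nn | rewrite last_rcons].
have := Cov_union fr_ok Hc => /(Cov_sub (G_split (h:=h) (M0:=M0))).
apply: Cov_le; apply: le_trans (eps_sum _ (ltW e0)) _ => //.
rewrite EFinD leeD2r //.
have -> : Vn n.+1 h = K * (1 - delta) by rewrite /Vn ltnNge hl /= mulr1 exprSr mulrA.
have -> : (\esum_(t in [set: nat]) (A t)%:E =
           \esum_(t in [set: nat]) (K%:E * (sF h t * f' t)%:E))%E.
  by apply: eq_esum => t _; rewrite -EFinM.
apply: le_trans (esum_scale _ _) _ => //.
  by move=> t; rewrite lee_fin mulr_ge0 ?f'_ge0 //; case/andP: (sF01 t).
by rewrite [X in (_ <= X)%E]EFinM; apply: lee_wpmul2l; [rewrite lee_fin | exact: sig_bound].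
Qed.

Lemma Claim_all n : ClaimP n /\ ClaimR n.
Proof.
elim: n => [|n [_ IH]]; first by split; [exact: ClaimP0 | apply: ClaimR_of_P; exact: ClaimP0].
have CP := ClaimP_of_R IH; split => //; exact: ClaimR_of_P.
Qed.


Lemma Vn_le n h : Vn n h <= (1 - delta) ^+ n.
Proof.
rewrite /Vn -[X in _ <= X]mul1r ler_wpM2r ?exprn_ge0 ?delta_ge0' //.
apply: mulr_ile1; rewrite ?PF_ge0 ?PF_le1 //; case: ifP => _ //.
- by rewrite subr_ge0 qq_le1.
- by rewrite lerBlDr lerDl ltW // qq_gt0.
Qed.

Lemma Cov0 (A : set (play M)) (b : \bar R) : Cov sF A b -> (b <= 0%:E)%E -> Cov sF A 0%:E.
Proof. by move=> C b0; apply: Cov_le C. Qed.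

Lemma union_eps (A : nat -> set (play M)) (e : R) : 0 < e ->
  (forall t, Cov sF (A t) (e / (2 ^ t.+1)%:R)%:E) ->
  Cov sF (\bigcup_(t in [set: nat]) A t) e%:E.
Proof.
move=> e0 H.
have H' : forall t, Cov sF (A t) ((0 : R)%:E + (e / (2 ^ t.+1)%:R)%:E)%E.
  by move=> t; rewrite add0e.
apply: Cov_le (Cov_union fr_ok H'); apply: le_trans (eps_sum _ (ltW e0)) _ => //.
by rewrite esum1 ?add0e.
Qed.

Lemma Claim2 j : forall h M0, h != [::] -> (M0 <= size h + j)%N ->
  forall e, 0 < e -> Cov sF (G h M0) e%:E.
Proof.
elim: j => [|j IH] h M0 hn hM e e0.
  rewrite addn0 in hM.
  have [dp d1] := delta_pos.
  have e2 : 0 < e / 2 by rewrite divr_gt0.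
  have [n Hn] := pow_small dp d1 e2.
  have C : Cov sF (G h M0) (Vn n h + e / 2)%:E.
    have [hl|hl] := leqP (last 0%N h) 1.
      by apply: (proj1 (Claim_all n)).
    by apply: (proj2 (Claim_all n)).
  apply: Cov_le C; rewrite lee_fin.
  have := le_trans (Vn_le n h) Hn; lra.
apply: Cov_sub (G_split (h:=h) (M0:=M0)) _; apply: union_eps => // t.
by apply: IH; [exact: rcons_nn | rewrite size_rcons addSnnS | exact: et_pos].
Qed.

Lemma parity_sub (p : play M) : Parity Col p -> exists N, forall j, (N <= j)%N -> p j != 1%N.
Proof.
move=> [c [ev [IO NIO]]].
have c0 : c = 0%N.
  have [n [_ Cn]] := IO 0%N; have := Col_le1 (p n); rewrite Cn.
  by case: c ev {IO NIO} Cn => [|[|]].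
subst c; have N1 := NIO 1%N isT.
apply: contrapT => H; apply: N1 => N; apply: contrapT => H2; apply: H.
exists N => j Nj; apply/negP => /eqP pj; apply: H2; exists j; split => //.
by rewrite /Col pj.
Qed.

Lemma FR_prob : Prob sF 0%N (Parity Col) = 0%E.
Proof.
apply/eqP; rewrite eq_le; apply/andP; split; last first.
  apply: le_ereal_inf_tmp => _ [c _ <-]; apply: esum_ge0 => i _.
  by rewrite lee_fin PF_ge0.
apply/lee_addgt0Pr => e e0; rewrite add0e.
apply: Cov_Prob.
have sub : Parity Col `<=` \bigcup_(N in [set: nat]) \bigcup_(x in [set: nat]) G [:: x] N.
  move=> p /parity_sub [N HN]; exists N => //; exists (p 0%N) => //; split => //.
  by case => //.
apply: Cov_sub sub _; apply: union_eps => // N; apply: union_eps; first exact: et_pos.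
move=> x; apply: (@Claim2 N) => //.
by apply: et_pos; apply: et_pos.
Qed.

End FR.

End Gen.

Theorem theorem6 (R : realType) :
  exists (M : MDP R) (Col : St M -> nat) (s : St M),
    infinitely_branching M /\
    (forall x, (Col x <= 1)%N) /\
    (forall T : FRtransducer M, Prob (FR_strategy T) s (Parity Col) = 0%E) /\
    (exists T : HDtransducer M, Prob (HD_strategy T) s (Parity Col) = 1%E).
Proof.
exists (MM R), (@Col R), 0%N; split; [|split; [|split]].
- exists 0%N => /=.
  have -> : [set t : nat | (2 <= t)%N] = [set: nat] `\` `I_2.
    apply/seteqP; split => t /=.
      by move=> t2; split => //; apply/negP; rewrite -leqNgt.
    by move=> [_ /negP]; rewrite -leqNgt.
  apply: infinite_setD; [exact: infinite_nat | exact: finite_II].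
- exact: Col_le1.
- move=> T; exact: FR_prob.
- by exists (HDT R); exact: HD_prob.
Qed.
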